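(* In the univariate contact-tracing model (described in the context), if $\alpha=\beta>0$, then for every $T\in\mathbb{N}$, every probability distribution $D$ on $\{0,1,2,\dots\}$ and every $p_T\in(0,1]$, every policy is optimal; that is, from any initial frontier, all policies achieve the same expected total benefit.
   Context: Univariate model. Fix $T\in\mathbb{N}$, a probability distribution $D$ on $\{0,1,2,\dots\}$, constants $p_T\in(0,1]$, $\alpha\ge 0$, and a discount parameter $\beta>0$. Every node has a recency $h\in\{0,1,\dots,T\}$. Each node (index case or child of an infected node) of recency $h$ is infected independently with probability $p(h)=p_T e^{-\alpha(T-h)}$. If a node of recency $h$ is infected, then for each $j\in\{0,\dots,h-1\}$ it has $Z_j\sim D$ children of recency $j$, all counts independent across $j$ and across nodes and independent of infection statuses. Contact tracing: at step $t=0$ the frontier is a given finite multiset of index cases with known recencies. At each step $t=0,1,2,\dots$ while the frontier is nonempty, the tracer selects one frontier node and queries it, removing it from the frontier. The query reveals its infection status; if it is infected and has recency $h$, benefit $e^{-\beta(h+t)}$ is collected and its children (with their recencies) are added to the frontier; otherwise benefit $0$ is collected and nothing is added. A policy is a (possibly history-dependent) rule choosing at each step which frontier node to query. A policy is optimal if for every initial frontier it maximizes the expected total collected benefit over all policies. *)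

(* Defs.v *)
From mathcomp Require Import all_boot all_order all_algebra.
From mathcomp Require Import all_classical all_reals all_analysis.
Set Implicit Arguments. Unset Strict Implicit. Unset Printing Implicit Defensive.
Import Order.TTheory GRing.Theory Num.Theory.
Local Open Scope classical_set_scope.
Local Open Scope ring_scope.

Section Model.
Variable R : realType.

(* An event of the history: (frontier before the query, queried index,
   outcome).  Outcome None = not infected; Some z = infected, with
   z = [:: Z_0; ...; Z_{h-1}] the numbers of children of each recency. *)
Definition event := (seq nat * nat * option (seq nat))%type.

(* A (deterministic, history-dependent) policy: given the history so far
   and the current frontier (a list of recencies), returns the index of the
   frontier node to query.  The current step t is the length of the history. *)
Definition policy := seq event -> seq nat -> nat.

Definition valid_policy (pi : policy) : Prop :=
  forall (H : seq event) (F : seq nat), F != [::] -> (pi H F < size F)%N.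

Definition prob_distr (D : nat -> R) : Prop :=
  (forall n, 0 <= D n) /\ (\esum_(n in [set: nat]) (D n)%:E = 1)%E.

Definition pinf (T : nat) (pT alpha : R) (h : nat) : R :=
  pT * expR (- (alpha * (T%:R - h%:R))).

Definition remove_at (i : nat) (F : seq nat) : seq nat :=
  take i F ++ drop i.+1 F.

Definition children (z : seq nat) : seq nat :=
  flatten [seq nseq (nth 0%N z j) j | j <- iota 0 (size z)].

Definition cweight (D : nat -> R) (z : seq nat) : R :=
  \prod_(j <- z) D j.

(* Expected benefit collected during the first n steps, under policy pi,
   given history hist and current frontier F (current step = size hist). *)
Fixpoint Vn (T : nat) (D : nat -> R) (pT alpha beta : R) (pi : policy)
  (n : nat) (hist : seq event) (F : seq nat) {struct n} : \bar R :=
  match n with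
  | 0%N => 0%E
  | n'.+1 =>
    match F with
    | [::] => 0%E
    | _ :: _ =>
      let i := pi hist F in
      let h := nth 0%N F i in
      let t := size hist in
      let F' := remove_at i F in
      let p := pinf T pT alpha h in
      ((1 - p)%:E * Vn T D pT alpha beta pi n' (rcons hist (F, i, None)) F'
       + p%:E *
         ((expR (- (beta * (h + t)%:R)))%:E
          + \esum_(z in [set z : seq nat | size z = h])
              ((cweight D z)%:E *
               Vn T D pT alpha beta pi n' (rcons hist (F, i, Some z))
                  (F' ++ children z))))%E
    end
  end.

(* Expected total collected benefit (infinite horizon), as the supremum
   (= monotone limit) of the finite-horizon expected benefits. *)
Definition value (T : nat) (D : nat -> R) (pT alpha beta : R) (pi : policy)
  (F : seq nat) : \bar R :=
  ereal_sup (range (fun n => Vn T D pT alpha beta pi n [::] F)).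

Definition optimal (T : nat) (D : nat -> R) (pT alpha beta : R)
  (pi : policy) : Prop :=
  valid_policy pi /\
  forall (F : seq nat), all (fun h => (h <= T)%N) F ->
  forall pi' : policy, valid_policy pi' ->
    (value T D pT alpha beta pi' F <= value T D pT alpha beta pi F)%E.

End Model.

(* Main.v *)
Require Import Defs.
From mathcomp Require Import all_boot all_order all_algebra.
From mathcomp Require Import all_classical all_reals all_analysis finmap.
From mathcomp Require Import ring lra.
Import Order.TTheory GRing.Theory Num.Theory.
Local Open Scope classical_set_scope.
Local Open Scope ring_scope.

Section Esum.
Variable R : realType.
Local Open Scope ereal_scope.

Lemma esumZ (T : choiceType) (I : set T) (a : T -> \bar R) (r : R) :
  (0 <= r)%R -> (forall i, I i -> 0 <= a i) ->
  \esum_(i in I) (r%:E * a i) = r%:E * \esum_(i in I) a i.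
Proof.
move=> r0 a0; rewrite /esum -ereal_supZl //; last first.
  by apply/set0P; exists 0; exists set0; [exact: fsets_set0|rewrite fsbig_set0].
congr ereal_sup; apply/seteqP; split => x /=.
- move=> [A [finA AI] <-]; exists (\sum_(i \in A) a i); first by exists A.
  rewrite !fsbig_finite // big_seq ge0_sume_distrr -?big_seq //.
  move=> i iA; have : i \in fset_set A by [].
  by rewrite in_fset_set // => /set_mem/AI/a0.
- move=> [y [A [finA AI] <-] <-]; exists A => //.
  rewrite !fsbig_finite // big_seq [X in _ = _ * X]big_seq ge0_sume_distrr //.
  move=> i iA; have : i \in fset_set A by [].
  by rewrite in_fset_set // => /set_mem/AI/a0.
Qed.
End Esum.

Section AlgS.
Local Open Scope ereal_scope.
Lemma alg (R : realType) (a b ei e0 ei' e0' : R) (w0 F G K : \bar R) :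
  (0 <= a <= 1)%R -> (0 <= b <= 1)%R -> (0 <= ei)%R -> (0 <= e0)%R -> (0 <= ei')%R -> (0 <= e0')%R ->
  0 <= w0 -> 0 <= F -> 0 <= G -> 0 <= K -> (a * ei = b * e0)%R -> (b * e0' = a * ei')%R ->
  (1-a)%:E*((1-b)%:E*w0 + b%:E*(e0'%:E + F)) + a%:E*(ei%:E + ((1-b)%:E*G + b%:E*(e0'%:E + K)))
  = (1-b)%:E*((1-a)%:E*w0 + a%:E*(ei'%:E + G)) + b%:E*(e0%:E + ((1-a)%:E*F + a%:E*(ei'%:E + K))).
Proof.
move=> /andP[a0 a1] /andP[b0 b1] ei0 e00 ei'0 e0'0 w00 F0 G0 K0 H1 H2.
have a'0 : (0 <= 1 - a)%R by rewrite subr_ge0.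
have b'0 : (0 <= 1 - b)%R by rewrite subr_ge0.
rewrite !ge0_muleDr ?adde_ge0 ?mule_ge0 ?lee_fin //.
rewrite !muleA -!EFinM.
rewrite [LHS](AC ((1*2)*(1*(1*2))) ((1*3*5*7)*(2*4*6))) [RHS](AC ((1*2)*(1*(1*2))) ((1*5*3*7)*(2*4*6))) /=.
rewrite -!EFinD; congr (_ + _ + _ + _ + _%:E); first [ by rewrite mulrC | lra | idtac ].
Qed.
End AlgS.


Section Model.
Variables (R : realType) (T : nat) (D : nat -> R) (pT beta : R).
Hypothesis D0 : forall n, (0 <= D n)%R.
Hypothesis D1 : (\esum_(n in [set: nat]) (D n)%:E = 1)%E.
Hypothesis pT0 : (0 < pT)%R.
Hypothesis pT1 : (pT <= 1)%R.
Hypothesis beta0 : (0 < beta)%R.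
Local Open Scope ereal_scope.

Definition Sz (h : nat) := [set z : seq nat | size z = h].
Definition E (h : nat) (f : seq nat -> \bar R) :=
  \esum_(z in Sz h) ((cweight D z)%:E * f z).

Lemma cweight_ge0 z : (0 <= cweight D z)%R.
Proof. by apply: prodr_ge0 => i _. Qed.

Lemma sum_cw h : \esum_(z in Sz h) (cweight D z)%:E = 1.
Proof.
elim: h => [|h IH].
  rewrite (_ : Sz 0 = [set [::]]); last first.
    by apply/seteqP; split => z /=; [move/size0nil|move=> ->].
  by rewrite esum_set1 /cweight ?big_nil // lee_fin cweight_ge0.
rewrite (_ : Sz h.+1 = (fun p => p.1 :: p.2) @` ([set: nat] `*` Sz h)); last first.
  apply/seteqP; split => z /=.
    by case: z => // n z [] Hz; exists (n, z).
  by move=> [[n z'] [_ /= <-] <-].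
rewrite esum_image; last by move=> [n1 z1] [n2 z2] _ _ /= [-> ->].
rewrite -(@esum_esum _ _ _ [set: nat] (fun _ => Sz h) (fun n z => (cweight D (n :: z))%:E)); last first.
  by move=> *; rewrite lee_fin cweight_ge0.
rewrite -D1; apply: eq_esum => n _.
rewrite /cweight.
under eq_esum do rewrite big_cons EFinM.
by rewrite esumZ // ?IH ?mule1 // => *; rewrite lee_fin cweight_ge0.
Qed.

Lemma E_ge0 h f : (forall z, Sz h z -> 0 <= f z) -> 0 <= E h f.
Proof. by move=> f0; apply: esum_ge0 => z Hz; rewrite mule_ge0 ?lee_fin ?cweight_ge0 ?f0. Qed.

Lemma E_ext h f g : (forall z, Sz h z -> f z = g z) -> E h f = E h g.
Proof. by move=> fg; apply: eq_esum => z Hz; rewrite fg. Qed.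

Lemma E_add h f g : (forall z, Sz h z -> 0 <= f z) -> (forall z, Sz h z -> 0 <= g z) ->
  E h (fun z => f z + g z) = E h f + E h g.
Proof.
move=> f0 g0; rewrite /E -esumD; last 2 first.
- by move=> z Hz; rewrite mule_ge0 ?lee_fin ?cweight_ge0 ?f0.
- by move=> z Hz; rewrite mule_ge0 ?lee_fin ?cweight_ge0 ?g0.
by apply: eq_esum => z Hz; rewrite ge0_muleDr ?f0 ?g0.
Qed.

Lemma E_scale h c f : (0 <= c)%R -> (forall z, Sz h z -> 0 <= f z) ->
  E h (fun z => c%:E * f z) = c%:E * E h f.
Proof.
move=> c0 f0; rewrite /E -esumZ //; last first.
  by move=> z Hz; rewrite mule_ge0 ?lee_fin ?cweight_ge0 ?f0.
by apply: eq_esum => z Hz; rewrite muleCA.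
Qed.

Lemma E_const h c : (0 <= c)%R -> E h (fun _ => c%:E) = c%:E.
Proof.
move=> c0; rewrite /E.
under eq_esum do rewrite muleC.
by rewrite esumZ ?sum_cw ?mule1 // => *; rewrite lee_fin cweight_ge0.
Qed.

Lemma E_swap h k (f : seq nat -> seq nat -> \bar R) :
  (forall x y, Sz h x -> Sz k y -> 0 <= f x y) ->
  E h (fun x => E k (fun y => f x y)) = E k (fun y => E h (fun x => f x y)).
Proof.
move=> f0.
have H1 : forall h k (f : seq nat -> seq nat -> \bar R),
  (forall x y, Sz h x -> Sz k y -> 0 <= f x y) ->
  E h (fun x => E k (fun y => f x y)) =
  \esum_(p in Sz h `*` Sz k) ((cweight D p.1)%:E * ((cweight D p.2)%:E * f p.1 p.2)).
  move=> h' k' g g0; rewrite /E.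
  rewrite -(@esum_esum _ _ _ (Sz h') (fun _ => Sz k')
     (fun x y => (cweight D x)%:E * ((cweight D y)%:E * g x y))); last first.
    by move=> x y Hx Hy; rewrite !mule_ge0 ?lee_fin ?cweight_ge0 ?g0.
  apply: eq_esum => x Hx; rewrite esumZ ?cweight_ge0 //.
  by move=> y Hy; rewrite mule_ge0 ?lee_fin ?cweight_ge0 ?g0.
rewrite H1 // H1; last by move=> x y Hx Hy; apply: f0.
rewrite (reindex_esum (Sz k `*` Sz h) _ (fun p => (p.2, p.1))); last first.
  split => /=.
  - by move=> [x y] [/= ? ?].
  - by move=> [x1 x2] [y1 y2] /= _ _ [-> ->].
  - by move=> [x y] [/= ? ?]; exists (y, x).
by apply: eq_esum => p _ /=; rewrite muleCA.
Qed.

Definition pp h := pinf T pT beta h.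
Definition ben h t := expR (- (beta * (h + t)%:R)).
Definition Kt t := (pT * expR (- (beta * (T + t)%:R)))%R.

Definition stepe (V : nat -> seq nat -> \bar R) t h S :=
  ((1 - pp h)%:E * V t.+1 S +
   (pp h)%:E * ((ben h t)%:E + E h (fun z => V t.+1 (S ++ children z))))%E.
Definition step V t F i := stepe V t (nth 0%N F i) (remove_at i F).

Fixpoint W n t F : \bar R :=
  match n with
  | 0%N => 0
  | n'.+1 => match F with [::] => 0 | _ :: _ => step (W n') t F 0 end
  end.

Lemma ppben h t : (pp h * ben h t = Kt t)%R.
Proof.
rewrite /pp /pinf /ben /Kt -mulrA -expRD; congr (_ * expR _)%R.
rewrite !natrD; ring.
Qed.

Lemma pp_ge0 h : (0 <= pp h)%R.
Proof. by rewrite /pp /pinf mulr_ge0 ?expR_ge0 // ltW. Qed.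

Lemma pp_le1 h : (h <= T)%N -> (pp h <= 1)%R.
Proof.
move=> hT; rewrite /pp /pinf.
have e1 : (expR (- (beta * (T%:R - h%:R))) <= 1)%R.
  rewrite expR_le1 oppr_le0; apply: mulr_ge0; [exact: ltW | by rewrite subr_ge0 ler_nat].
by rewrite (le_trans (ler_wpM2l (ltW pT0) e1)) ?mulr1.
Qed.

Lemma ben_ge0 h t : (0 <= ben h t)%R.
Proof. exact: expR_ge0. Qed.

Lemma Kt_ge0 t : (0 <= Kt t)%R.
Proof. by rewrite /Kt mulr_ge0 ?expR_ge0 // ltW. Qed.

Definition vf (F : seq nat) := all (fun h => (h <= T)%N) F.

Lemma remove_at0 x S : remove_at 0 (x :: S) = S.
Proof. by rewrite /remove_at /= drop0. Qed.

Lemma remove_atS j x S : remove_at j.+1 (x :: S) = x :: remove_at j S.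
Proof. by []. Qed.

Lemma remove_at_cat j F X : (j < size F)%N -> remove_at j (F ++ X) = remove_at j F ++ X.
Proof.
elim: F j => [|x F IH] [|j] //= Hj; first by rewrite !remove_at0.
by rewrite !remove_atS IH.
Qed.

Lemma vf_remove i F : vf F -> vf (remove_at i F).
Proof.
move=> /allP H; apply/allP => x; rewrite /remove_at mem_cat => /orP[/mem_take|/mem_drop] /H //.
Qed.

Lemma vf_cat F G : vf (F ++ G) = vf F && vf G.
Proof. exact: all_cat. Qed.

Lemma children_lt z x : x \in children z -> (x < size z)%N.
Proof.
rewrite /children => /flattenP [s] /mapP [j]; rewrite mem_iota add0n => /andP[_ jz] -> /nseqP [-> _] //.
Qed.

Lemma vf_children z : (size z <= T)%N -> vf (children z).
Proof.
by move=> zT; apply/allP => x /children_lt xz; apply: leq_trans (ltnW xz) zT.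
Qed.

Lemma vf_nth F i : vf F -> (nth 0%N F i <= T)%N.
Proof.
move=> /allP H; case: (ltnP i (size F)) => iF; first by apply: H; rewrite mem_nth.
by rewrite nth_default.
Qed.

Lemma perm_remove G i : (i < size G)%N -> perm_eq G (nth 0%N G i :: remove_at i G).
Proof.
elim: G i => [|x G IH] [|j] //= Hj; first by rewrite remove_at0.
rewrite remove_atS; have H1 : perm_eq (x :: G) (x :: nth 0%N G j :: remove_at j G) by rewrite perm_cons IH.
apply: (perm_trans H1).
by apply/permP => a /=; rewrite addnCA.
Qed.

Lemma stepe_ge0 V t h S : (h <= T)%N -> vf S ->
  (forall t F, vf F -> 0 <= V t F) -> 0 <= stepe V t h S.
Proof.
move=> hT vS V0; rewrite /stepe adde_ge0 // mule_ge0 // ?lee_fin ?subr_ge0 ?pp_le1 ?pp_ge0 ?V0 //.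
rewrite adde_ge0 ?lee_fin ?ben_ge0 // E_ge0 // => z /= zh.
by rewrite V0 // vf_cat vS vf_children // zh.
Qed.

Lemma W_ge0 n t F : vf F -> 0 <= W n t F.
Proof.
elim: n t F => [|n IH] t [|x S] //= vF.
rewrite /step stepe_ge0 //; first exact: vf_nth.
exact: vf_remove.
Qed.

Lemma W_S_cons n t x S : W n.+1 t (x :: S) = stepe (W n) t x S.
Proof. by rewrite /= /step /= remove_at0. Qed.

Lemma step0 t F i : step (W 0) t F i = (Kt t)%:E.
Proof.
rewrite /step /stepe /= mule0 add0e.
rewrite (E_ext _ _ (fun _ => (0%R)%:E)) // E_const // adde0 -EFinM ppben //.
Qed.

Lemma stepe_perm V t h S S' :
  (forall t F G, vf F -> perm_eq F G -> V t F = V t G) ->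
  (h <= T)%N -> vf S -> perm_eq S S' -> stepe V t h S = stepe V t h S'.
Proof.
move=> HV hT vS pS; rewrite /stepe (HV t.+1 S S') //.
rewrite (E_ext _ _ (fun z => V t.+1 (S' ++ children z))) // => z /= zh.
by apply: HV; [rewrite vf_cat vS vf_children ?zh | rewrite perm_cat2r].
Qed.

Lemma E_stepe h V t' h' (S : seq nat -> seq nat) :
  (h' <= T)%N -> (forall z, Sz h z -> vf (S z)) ->
  (forall t F, vf F -> 0 <= V t F) ->
  E h (fun z => stepe V t' h' (S z)) =
  (1 - pp h')%:E * E h (fun z => V t'.+1 (S z)) +
  (pp h')%:E * ((ben h' t')%:E + E h (fun z => E h' (fun z' => V t'.+1 (S z ++ children z')))).
Proof.
move=> h'T vS V0.
have a'0 : (0 <= 1 - pp h')%R by rewrite subr_ge0 pp_le1.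
have vS' : forall z z', Sz h z -> Sz h' z' -> vf (S z ++ children z').
  by move=> z z' zh z'h; rewrite vf_cat vS // vf_children // z'h.
rewrite /stepe E_add; last 2 first.
- by move=> z zh; rewrite mule_ge0 ?lee_fin ?V0 ?vS.
- move=> z zh; rewrite mule_ge0 ?lee_fin ?pp_ge0 // adde_ge0 ?lee_fin ?ben_ge0 //.
  by apply: E_ge0 => z' z'h; rewrite V0 // vS'.
rewrite E_scale //; last by move=> z zh; rewrite V0 ?vS.
rewrite E_scale ?pp_ge0 //; last first.
  move=> z zh; rewrite adde_ge0 ?lee_fin ?ben_ge0 //.
  by apply: E_ge0 => z' z'h; rewrite V0 // vS'.
rewrite E_add ?E_const ?ben_ge0 //.
- by move=> z zh; rewrite lee_fin ben_ge0.
- by move=> z zh; apply: E_ge0 => z' z'h; rewrite V0 // vS'.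
Qed.

Lemma main n :
  (forall t F G, vf F -> perm_eq F G -> W n t F = W n t G) /\
  (forall t F i, vf F -> (i < size F)%N -> step (W n) t F i = W n.+1 t F).
Proof.
elim: n => [|n [IHp IHs]].
  split => // t [|x S] i vF iF //.
  have -> : W 1 t (x :: S) = step (W 0) t (x :: S) 0 by [].
  by rewrite !step0.
have Pp : forall t F G, vf F -> perm_eq F G -> W n.+1 t F = W n.+1 t G.
  move=> t [|x S] G vF pFG.
    by have := perm_size pFG; case: G pFG.
  have xG : x \in G by rewrite -(perm_mem pFG) mem_head.
  have iG : (index x G < size G)%N by rewrite index_mem.
  have vG : vf G by rewrite /vf -(perm_all _ pFG).
  rewrite -(IHs t G (index x G) vG iG) W_S_cons /step nth_index //.
  have vx : (x <= T)%N by move: vF => /andP[].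
  have vS : vf S by move: vF => /andP[].
  apply: stepe_perm => //.
  have H1 := perm_remove _ _ iG; rewrite nth_index // in H1.
  by rewrite -(perm_cons x); apply: (perm_trans pFG H1).
split => //.
move=> t [|x0 F1] [|j] vF iF //.
have jF1 : (j < size F1)%N by [].
have vx0 : (x0 <= T)%N by move: vF => /andP[].
have vF1 : vf F1 by move: vF => /andP[].
set y := nth 0%N F1 j.
set Rr := remove_at j F1.
have vy : (y <= T)%N by apply: vf_nth.
have vR : vf Rr by apply: vf_remove.
have HF1X : forall X, vf X -> W n.+1 t.+1 (F1 ++ X) = stepe (W n) t.+1 y (Rr ++ X).
  move=> X vX; rewrite -(IHs t.+1 (F1 ++ X) j) ?vf_cat ?vF1 ?size_cat ?ltn_addr //.
  by rewrite /step nth_cat jF1 remove_at_cat.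
have HF1 : W n.+1 t.+1 F1 = stepe (W n) t.+1 y Rr.
  by have := HF1X [::]; rewrite !cats0; apply.
have -> : step (W n.+1) t (x0 :: F1) j.+1 = stepe (W n.+1) t y (x0 :: Rr).
  by rewrite /step remove_atS.
rewrite W_S_cons.
have W0 : forall t F, vf F -> 0 <= W n t F by move=> *; apply: W_ge0.
have vRc : forall z, Sz y z -> vf (Rr ++ children z).
  by move=> z zh; rewrite vf_cat vR vf_children // zh.
have vRc0 : forall z, Sz x0 z -> vf (Rr ++ children z).
  by move=> z zh; rewrite vf_cat vR vf_children // zh.
have EL : stepe (W n.+1) t y (x0 :: Rr) =
   (1 - pp y)%:E * stepe (W n) t.+1 x0 Rr +
   (pp y)%:E * ((ben y t)%:E + E y (fun zi => stepe (W n) t.+1 x0 (Rr ++ children zi))).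
  rewrite {1}/stepe W_S_cons.
  by rewrite (E_ext _ _ (fun zi => stepe (W n) t.+1 x0 (Rr ++ children zi))) // => z _; rewrite cat_cons W_S_cons.
have ER : stepe (W n.+1) t x0 F1 =
   (1 - pp x0)%:E * stepe (W n) t.+1 y Rr +
   (pp x0)%:E * ((ben x0 t)%:E + E x0 (fun z0 => stepe (W n) t.+1 y (Rr ++ children z0))).
  rewrite {1}/stepe HF1.
  rewrite (E_ext _ _ (fun z0 => stepe (W n) t.+1 y (Rr ++ children z0))) // => z zh.
  by rewrite HF1X // vf_children // zh.
rewrite EL ER !E_stepe //.
rewrite (E_swap _ _ (fun z0 zi => W n t.+2 ((Rr ++ children z0) ++ children zi))); last first.
  by move=> z0 zi hz0 hzi; rewrite W0 // -catA vf_cat vR vf_cat !vf_children // ?hz0 ?hzi.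
rewrite (E_ext x0 (fun y0 => E y (fun x => W n t.+2 ((Rr ++ children x) ++ children y0)))
   (fun z => E y (fun z' => W n t.+2 ((Rr ++ children z) ++ children z')))); last first.
  move=> z0 hz0; apply: E_ext => zi hzi; apply: IHp.
    by rewrite -catA vf_cat vR vf_cat !vf_children // ?hz0 ?hzi.
  by rewrite -!catA !perm_cat2l perm_catC.
rewrite /stepe.
apply: alg; rewrite ?pp_ge0 ?pp_le1 ?ben_ge0 ?W0 ?ppben //.
- by apply: E_ge0 => z hz; rewrite W0 ?vRc0.
- by apply: E_ge0 => z hz; rewrite W0 ?vRc.
- apply: E_ge0 => z hz; apply: E_ge0 => z' hz'; rewrite W0 //.
  by rewrite vf_cat vRc0 // vf_children // hz'.
Qed.

Lemma Vn_W pi n hist F : valid_policy pi -> vf F ->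
  Vn T D pT beta beta pi n hist F = W n (size hist) F.
Proof.
move=> vpi; elim: n hist F => [|n IH] hist [|x S] vF //.
set F := x :: S.
have iF : (pi hist F < size F)%N by apply: vpi.
rewrite -(proj2 (main n) (size hist) F (pi hist F)) //.
rewrite /= IH; last exact: vf_remove.
rewrite (@eq_esum _ _ _ _ (fun z => (cweight D z)%:E * W n (size hist).+1 (remove_at (pi hist F) F ++ children z))); last first.
  move=> z /= zh; rewrite IH ?size_rcons //.
  by rewrite vf_cat vf_remove // vf_children // zh vf_nth.
by rewrite size_rcons.
Qed.

End Model.


Theorem theorem6p4 (R : realType) (T : nat) (D : nat -> R) (pT alpha beta : R) :
  prob_distr D -> 0 < pT -> pT <= 1 -> 0 < beta -> alpha = beta ->
  forall pi : policy, valid_policy pi -> optimal T D pT alpha beta pi.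
Proof.
move=> [D0 D1] pT0 pT1 beta0 -> pi vpi; split => // F vF pi' vpi'.
have H : forall p, valid_policy p ->
    (fun n => Vn T D pT beta beta p n [::] F) = (fun n => @W R T D pT beta n 0 F).
  by move=> p vp; apply: boolp.funext => n; rewrite (@Vn_W R T D pT beta D0 D1 pT0 pT1 beta0) //.
by rewrite /value H // H.
Qed.
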